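(* Let $Q_0,\beta_1,\beta_2,\beta_3,c_1,c_2,c_3,\theta,\pi,\delta,\alpha,\mu$ be positive constants and $u_1\in[0,1]$ a constant. Consider the system \[ \begin{aligned} S' &= Q_0-\beta_m S-\mu S,\\ I_1' &= \beta_m S-(\theta+\mu+\delta)I_1,\\ I_2' &= \theta I_1-(\delta+\mu+\pi)I_2,\\ A' &= \delta I_1+\delta I_2+\pi I_2-(\alpha+\mu)A, \end{aligned} \qquad \beta_m=\frac{(1-u_1)(\beta_1c_1I_1+\beta_2c_2I_2+\beta_3c_3A)}{N},\quad N=S+I_1+I_2+A, \] and define $R_0=\zeta_1+\zeta_2+\zeta_3+\zeta_4$ with \[ \zeta_1=\frac{(1-u_1)\beta_1c_1}{\theta+\delta+\mu},\quad \zeta_2=\frac{(1-u_1)\beta_2c_2\theta}{(\theta+\delta+\mu)(\delta+\mu+\pi)},\quad \zeta_3=\frac{(1-u_1)\beta_3c_3\theta(\delta+\pi)}{(\theta+\delta+\mu)(\delta+\mu+\pi)(\alpha+\mu)},\quad \zeta_4=\frac{(1-u_1)\beta_3c_3\delta}{(\theta+\delta+\mu)(\alpha+\mu)}. \] (i) If $R_0\le 1$, the system admits the single (disease-free) equilibrium $E_0=(Q_0/\mu,0,0,0)$ in the nonnegative orthant. (ii) If $R_0>1$, the system admits two distinct equilibria: $E_0$ and a positive endemic equilibrium $E_1=(S^*,I_1^*,I_2^*,A^* )$ with all components positive.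
   Context: $S$ denotes susceptibles, $I_1$ unaware infectives, $I_2$ aware infectives, $A$ individuals with AIDS; $N$ is the total population; $R_0$ is the basic reproduction number. *)

(* Defs.v *)
From Stdlib Require Import Reals.
Open Scope R_scope.

Record params := mkParams {
  Q0 : R; beta1 : R; beta2 : R; beta3 : R; c1 : R; c2 : R; c3 : R;
  theta : R; pi_ : R; delta : R; alpha : R; mu : R; u1 : R }.

Definition params_ok (p : params) : Prop :=
  0 < Q0 p /\ 0 < beta1 p /\ 0 < beta2 p /\ 0 < beta3 p /\
  0 < c1 p /\ 0 < c2 p /\ 0 < c3 p /\ 0 < theta p /\ 0 < pi_ p /\
  0 < delta p /\ 0 < alpha p /\ 0 < mu p /\ 0 <= u1 p <= 1.

Definition state := (R * R * R * R)%type.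

Definition Ntot (x : state) : R :=
  let '(s, I1, I2, A) := x in s + I1 + I2 + A.

Definition beta_m (p : params) (x : state) : R :=
  let '(s, I1, I2, A) := x in
  (1 - u1 p) * (beta1 p * c1 p * I1 + beta2 p * c2 p * I2 + beta3 p * c3 p * A)
  / Ntot x.

Definition rhs (p : params) (x : state) : state :=
  let '(s, I1, I2, A) := x in
  let bm := beta_m p x in
  (Q0 p - bm * s - mu p * s,
   bm * s - (theta p + mu p + delta p) * I1,
   theta p * I1 - (delta p + mu p + pi_ p) * I2,
   delta p * I1 + delta p * I2 + pi_ p * I2 - (alpha p + mu p) * A).

Definition is_equilibrium (p : params) (x : state) : Prop :=
  rhs p x = (0, 0, 0, 0).

Definition nonneg_state (x : state) : Prop :=
  let '(s, I1, I2, A) := x in 0 <= s /\ 0 <= I1 /\ 0 <= I2 /\ 0 <= A.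

Definition positive_state (x : state) : Prop :=
  let '(s, I1, I2, A) := x in 0 < s /\ 0 < I1 /\ 0 < I2 /\ 0 < A.

Definition E0 (p : params) : state := (Q0 p / mu p, 0, 0, 0).

Definition zeta1 p := (1 - u1 p) * beta1 p * c1 p / (theta p + delta p + mu p).
Definition zeta2 p := (1 - u1 p) * beta2 p * c2 p * theta p
  / ((theta p + delta p + mu p) * (delta p + mu p + pi_ p)).
Definition zeta3 p := (1 - u1 p) * beta3 p * c3 p * theta p * (delta p + pi_ p)
  / ((theta p + delta p + mu p) * (delta p + mu p + pi_ p) * (alpha p + mu p)).
Definition zeta4 p := (1 - u1 p) * beta3 p * c3 p * delta p
  / ((theta p + delta p + mu p) * (alpha p + mu p)).
Definition R0_num p := zeta1 p + zeta2 p + zeta3 p + zeta4 p.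

(* Main.v *)
Require Import Defs.
From Stdlib Require Import Reals Lra Psatz.
Open Scope R_scope.

Definition k1 p := theta p + mu p + delta p.
Definition k2 p := delta p + mu p + pi_ p.
Definition k3 p := alpha p + mu p.
Definition r2 p := theta p / k2 p.
Definition r3 p := (delta p + (delta p + pi_ p) * r2 p) / k3 p.
Definition cc p := 1 + r2 p + r3 p.
Definition Kc p := (1 - u1 p) * (beta1 p * Defs.c1 p + beta2 p * Defs.c2 p * r2 p + beta3 p * Defs.c3 p * r3 p).
Definition I1s p := Q0 p / (k1 p + mu p * cc p / (R0_num p - 1)).
Definition Ee p : state := (cc p * I1s p / (R0_num p - 1), I1s p, r2 p * I1s p, r3 p * I1s p).

Section S.
Variable p : params.
Hypothesis Hp : params_ok p.

Lemma pos_facts : 0 < k1 p /\ 0 < k2 p /\ 0 < k3 p /\ 0 < r2 p /\ 0 < r3 p /\ 0 < cc p.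
Proof.
  destruct Hp as (HQ&Hb1&Hb2&Hb3&Hc1&Hc2&Hc3&Hth&Hpi&Hde&Hal&Hmu&Hu).
  assert (h1: 0 < k1 p) by (unfold k1; lra).
  assert (h2: 0 < k2 p) by (unfold k2; lra).
  assert (h3: 0 < k3 p) by (unfold k3; lra).
  assert (h4: 0 < r2 p) by (unfold r2; apply Rdiv_lt_0_compat; lra).
  assert (h5: 0 < r3 p) by (unfold r3; apply Rdiv_lt_0_compat; nra).
  repeat split; auto. unfold cc; lra.
Qed.

Lemma Kc_eq : Kc p = R0_num p * k1 p.
Proof.
  destruct Hp as (HQ&Hb1&Hb2&Hb3&Hc1&Hc2&Hc3&Hth&Hpi&Hde&Hal&Hmu&Hu).
  unfold Kc, R0_num, zeta1, zeta2, zeta3, zeta4, r3, r2, k1, k2, k3.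
  field; repeat split; lra.
Qed.

Lemma E0_eq : is_equilibrium p (E0 p).
Proof.
  destruct Hp as (HQ&Hb1&Hb2&Hb3&Hc1&Hc2&Hc3&Hth&Hpi&Hde&Hal&Hmu&Hu).
  unfold is_equilibrium, rhs, beta_m, Ntot, E0; cbv beta iota.
  f_equal; [f_equal; [f_equal|] |]; field; lra.
Qed.

Lemma Ee_eq : 1 < R0_num p -> is_equilibrium p (Ee p) /\ positive_state (Ee p).
Proof.
  intro HR.
  pose proof pos_facts as (h1&h2&h3&h4&h5&h6).
  pose proof Kc_eq as HK.
  destruct Hp as (HQ&Hb1&Hb2&Hb3&Hc1&Hc2&Hc3&Hth&Hpi&Hde&Hal&Hmu&Hu).
  assert (hD : 0 < k1 p + mu p * cc p / (R0_num p - 1)).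
  { assert (0 < mu p * cc p / (R0_num p - 1)) by (apply Rdiv_lt_0_compat; nra). lra. }
  assert (hI : 0 < I1s p) by (unfold I1s; apply Rdiv_lt_0_compat; lra).
  assert (hS : 0 < cc p * I1s p / (R0_num p - 1)) by (apply Rdiv_lt_0_compat; nra).
  split.
  2:{ unfold positive_state, Ee; repeat split; auto; nra. }
  set (R0 := R0_num p) in *. set (I := I1s p) in *.
  set (S0 := cc p * I / (R0 - 1)).
  assert (HN : S0 + I + r2 p * I + r3 p * I = R0 * S0).
  { unfold S0, cc. field. lra. }
  assert (HKI : (1 - u1 p) * (beta1 p * Defs.c1 p * I + beta2 p * Defs.c2 p * (r2 p * I) +
      beta3 p * Defs.c3 p * (r3 p * I)) = R0 * k1 p * I).
  { rewrite <- HK. unfold Kc. ring. }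
  assert (Hbm : (1 - u1 p) * (beta1 p * Defs.c1 p * I + beta2 p * Defs.c2 p * (r2 p * I) +
      beta3 p * Defs.c3 p * (r3 p * I)) / (S0 + I + r2 p * I + r3 p * I) * S0 = k1 p * I).
  { rewrite HKI, HN. unfold S0. field. repeat split; lra. }
  assert (HQI : Q0 p = k1 p * I + mu p * S0).
  { unfold S0, I, I1s. fold R0. field. repeat split; try lra; nra. }
  unfold is_equilibrium, rhs, beta_m, Ntot, Ee; cbv beta iota. fold R0 I S0.
  rewrite Hbm.
  unfold r3, r2, k1, k2, k3 in *.
  f_equal; [f_equal; [f_equal|] |].
  - lra.
  - unfold k1; ring.
  - field; lra.
  - field; split; lra.
Qed.

Lemma classify x : nonneg_state x -> is_equilibrium p x ->
  x = E0 p \/ (1 < R0_num p /\ x = Ee p).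
Proof.
  pose proof pos_facts as (h1&h2&h3&h4&h5&h6).
  pose proof Kc_eq as HK.
  destruct Hp as (HQ&Hb1&Hb2&Hb3&Hc1&Hc2&Hc3&Hth&Hpi&Hde&Hal&Hmu&Hu).
  destruct x as [[[s i1] i2] a].
  unfold nonneg_state, is_equilibrium, rhs, beta_m, Ntot; cbv beta iota.
  intros (hs&hi1&hi2&ha) H.
  injection H as e1 e2 e3 e4.
  set (bm := (1 - u1 p) * (beta1 p * Defs.c1 p * i1 + beta2 p * Defs.c2 p * i2 + beta3 p * Defs.c3 p * a) /
          (s + i1 + i2 + a)) in *.
  assert (hs' : 0 < s).
  { destruct (Req_dec s 0) as [->|]; [|lra]. rewrite !Rmult_0_r in e1. lra. }
  assert (ei2 : i2 = r2 p * i1) by (unfold r2, k2 in *; field_simplify_eq; lra).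
  assert (ea : a = r3 p * i1).
  { rewrite ei2 in e4. unfold r3. field_simplify_eq; [|unfold k3; lra]. unfold k3 in *. lra. }
  assert (eK : bm = Kc p * i1 / (s + cc p * i1)).
  { unfold bm. rewrite ei2, ea. unfold Kc, cc. f_equal; ring. }
  clearbody bm.
  destruct (Req_dec i1 0) as [Hz|Hnz].
  - left. subst i1. rewrite Rmult_0_r, Rdiv_0_l in eK. subst bm.
    rewrite ei2, ea, !Rmult_0_r. unfold E0. assert (s = Q0 p / mu p) as -> by (field_simplify_eq; [|lra]; lra). reflexivity.
  - assert (hi : 0 < i1) by lra.
    assert (hN : 0 < s + cc p * i1) by nra.
    assert (e2' : Kc p * i1 * s = k1 p * i1 * (s + cc p * i1)).
    { rewrite eK in e2. replace (Kc p * i1 * s) with ((Kc p * i1 / (s + cc p * i1) * s) * (s + cc p * i1)) by (field; lra). replace (Kc p * i1 / (s + cc p * i1) * s) with (k1 p * i1) by (unfold k1; lra). ring. }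
    rewrite HK in e2'.
    assert (eR : R0_num p * s = s + cc p * i1).
    { apply (Rmult_eq_reg_l (k1 p * i1)); [|nra]. rewrite <- e2'. ring. }
    assert (HR : 1 < R0_num p) by nra.
    right. split; auto.
    assert (eQ : Q0 p = k1 p * i1 + mu p * s) by (unfold k1; lra).
    assert (es : s = cc p * i1 / (R0_num p - 1)) by (field_simplify_eq; lra).
    assert (ei : i1 = I1s p).
    { unfold I1s. rewrite eQ, es. field. repeat split; try lra. nra. }
    rewrite ei2, ea, es, ei. reflexivity.
Qed.
End S.

Theorem theorem3 (p : params) (Hp : params_ok p) :
  (R0_num p <= 1 ->
     forall x : state, nonneg_state x -> (is_equilibrium p x <-> x = E0 p)) /\
  (1 < R0_num p ->
     is_equilibrium p (E0 p) /\
     exists E1 : state,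
       positive_state E1 /\ is_equilibrium p E1 /\ E1 <> E0 p /\
       (forall x : state, nonneg_state x -> is_equilibrium p x -> x = E0 p \/ x = E1)).
Proof.
  split.
  - intros HR x Hx; split.
    + intro He. destruct (classify p Hp x Hx He) as [|[]]; auto; lra.
    + intros ->. apply E0_eq; auto.
  - intro HR. split; [apply E0_eq; auto|].
    destruct (Ee_eq p Hp HR) as [He Hpos].
    exists (Ee p). split; [auto|split; [auto|split]].
    + unfold Ee, E0. intro H. injection H as _ _ H _.
      unfold positive_state, Ee in Hpos. lra.
    + intros x Hx Hex. destruct (classify p Hp x Hx Hex) as [|[]]; auto.
Qed.
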